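(* Let $k\ge 1$ be an integer. Every $4k$-edge-connected graph contains $k$ pairwise edge-disjoint $(2,2)$-tight spanning subgraphs.
   Context: A connected graph is $m$-edge-connected if it remains connected after the removal of any $m-1$ edges. Graphs are finite and simple. A graph $G$ is $(2,2)$-sparse if $|E(H)|\le\max\{2|V(H)|-2,0\}$ for every subgraph $H$ of $G$, and $(2,2)$-tight if moreover $|E(G)|=2|V(G)|-2$. *)

(* Defs.v *)
From mathcomp Require Import all_boot.
Set Implicit Arguments. Unset Strict Implicit. Unset Printing Implicit Defensive.

(* A finite simple graph on vertex type V: its vertex set is [set: V] (or a
   subset X), its edge set is a set of 2-element subsets of V. *)
Definition is_edge_set (V : finType) (F : {set {set V}}) : bool :=
  [forall e in F, #|e| == 2].

Definition adj (V : finType) (F : {set {set V}}) : rel V :=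
  fun x y => (x != y) && ([set x; y] \in F).

Definition connectedG (V : finType) (F : {set {set V}}) : Prop :=
  forall x y : V, connect (adj F) x y.

Definition edge_connected (V : finType) (m : nat) (E : {set {set V}}) : Prop :=
  forall S : {set {set V}}, S \subset E -> #|S| < m -> connectedG (E :\: S).

Definition subgraph_of (V : finType) (F : {set {set V}})
  (X : {set V}) (F' : {set {set V}}) : bool :=
  (F' \subset F) && [forall e in F', e \subset X].

Definition sparse22 (V : finType) (F : {set {set V}}) : Prop :=
  forall (X : {set V}) (F' : {set {set V}}), subgraph_of F X F' ->
    #|F'| <= maxn (2 * #|X| - 2) 0.

(* (2,2)-tight spanning graph ([set: V], F): sparse and |E| = 2|V| - 2
   (stated without truncated subtraction). *)
Definition tight22 (V : finType) (F : {set {set V}}) : Prop :=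
  sparse22 F /\ #|F| + 2 = 2 * #|V|.

(* Main.v *)
Require Import Defs.
From mathcomp Require Import all_boot.
From mathcomp Require Import zify.
Set Implicit Arguments. Unset Strict Implicit. Unset Printing Implicit Defensive.

Section Sparse.
Variable V : finType.
Implicit Types (F A : {set {set V}}) (X Y T : {set V}) (e f g h : {set V}) (x : V).

Definition ie F X := #|[set f in F | f \subset X]|.
Definition forest F := [forall X : {set V}, ie F X <= #|X|.-1].
Definition tight F X := ie F X == #|X|.-1.
Definition twos F := {in F, forall f, #|f| = 2}.

Lemma ie_sub A F X : A \subset F -> ie A X <= ie F X.
Proof.
move=> sAF; apply: subset_leq_card; apply/subsetP=> f.
by rewrite !inE => /andP[/(subsetP sAF) -> ->].
Qed.

Lemma ie_mono F X Y : X \subset Y -> ie F X <= ie F Y.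
Proof.
move=> sXY; apply: subset_leq_card; apply/subsetP=> f.
by rewrite !inE => /andP[-> /subset_trans ->].
Qed.

Lemma ie_add F g X : ie (F :|: [set g]) X <= ie F X + (g \subset X).
Proof.
rewrite /ie.
have -> : [set f in F :|: [set g] | f \subset X] =
          [set f in F | f \subset X] :|: [set f in [set g] | f \subset X].
  by apply/setP=> f; rewrite !inE andb_orl.
apply: leq_trans (leq_card_setU _ _).1 _; rewrite leq_add2l.
case: (boolP (g \subset X)) => gX.
  apply: leq_trans (subset_leq_card (_ : _ \subset [set g])) _; last by rewrite cards1.
  by apply/subsetP=> f; rewrite !inE; case/andP.
rewrite leqn0 cards_eq0; apply/eqP/setP=> f; rewrite !inE.
by apply/andP=> -[/eqP -> ]; rewrite (negbTE gX).
Qed.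

Lemma ie_add_eq F g X : g \notin F -> g \subset X -> ie (F :|: [set g]) X = (ie F X).+1.
Proof.
move=> gF gX; rewrite /ie.
have -> : [set f in F :|: [set g] | f \subset X] = g |: [set f in F | f \subset X].
  apply/setP=> f; rewrite !inE; case: (f =P g) => [->|]; first by rewrite gX orbT.
  by rewrite orbF.
by rewrite cardsU1 inE (negbTE gF).
Qed.

Lemma ie_del F h X : h \in F -> h \subset X -> (ie (F :\ h) X).+1 = ie F X.
Proof.
move=> hF hX; rewrite /ie (cardsD1 h [set f in F | f \subset X]) inE hF hX /=.
congr (_.+1); apply: eq_card => f; rewrite !inE; case: (f =P h) => //=.
Qed.

Lemma ie_del_out F h X : ~~ (h \subset X) -> ie (F :\ h) X = ie F X.
Proof.
move=> hX; rewrite /ie; apply: eq_card => f; rewrite !inE.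
by case: (f =P h) => //= ->; rewrite (negbTE hX) andbF.
Qed.

Lemma forestP F X : forest F -> ie F X <= #|X|.-1.
Proof. by move/forallP. Qed.

Lemma forestI F : (forall Y : {set V}, ie F Y <= #|Y|.-1) -> forest F.
Proof. by move=> H; apply/forallP. Qed.

Lemma not_tight F X : forest F -> ~~ tight F X -> ie F X < #|X|.-1.
Proof. by move=> fF tX; rewrite ltn_neqAle tX forestP. Qed.

Lemma tight_eq F X : tight F X -> ie F X = #|X|.-1.
Proof. by move/eqP. Qed.

Lemma ie_setT F : ie F setT = #|F|.
Proof. by rewrite /ie; apply: eq_card => f; rewrite !inE subsetT andbT. Qed.

Lemma tight1 F x : twos F -> tight F [set x].
Proof.
move=> tw; rewrite /tight cards1 /= /ie cards_eq0; apply/eqP/setP=> f; rewrite !inE.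
apply/andP=> -[/tw c2 /subset_leq_card]; by rewrite c2 cards1.
Qed.

Lemma ie_union F X Y : ie F X + ie F Y <= ie F (X :|: Y) + ie F (X :&: Y).
Proof.
rewrite /ie -cardsUI; apply: leq_add; apply: subset_leq_card; apply/subsetP=> f;
rewrite !inE.
  by case/orP=> /andP[-> s]; rewrite (subset_trans s) // (subsetUl, subsetUr).
by rewrite subsetI => /andP[/andP[-> ->] /andP[_ ->]].
Qed.

Lemma tight_union F X Y : forest F -> tight F X -> tight F Y -> X :&: Y != set0 ->
  tight F (X :|: Y) /\ tight F (X :&: Y).
Proof.
move=> fF /eqP tX /eqP tY /set0Pn[z zXY].
have h := ie_union F X Y. have h1 := forestP (X :|: Y) fF. have h2 := forestP (X :&: Y) fF.
have c := cardsUI X Y.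
have p1 : 0 < #|X :&: Y| by apply/card_gt0P; exists z.
have p2 : 0 < #|X| by apply: leq_trans p1 (subset_leq_card (subsetIl _ _)).
have p3 : 0 < #|Y| by apply: leq_trans p1 (subset_leq_card (subsetIr _ _)).
have p4 : 0 < #|X :|: Y| by apply: leq_trans p2 (subset_leq_card (subsetUl _ _)).
rewrite /tight; split; apply/eqP; move: h h1 h2 c p1 p2 p3 p4 tX tY; clear; lia.
Qed.

Lemma tight_conn F T (A : {set V}) : forest F -> tight F T -> A \subset T -> A != set0 -> T :\: A != set0 ->
  exists2 h, h \in F & [&& h \subset T, h :&: A != set0 & h :&: (T :\: A) != set0].
Proof.
move=> fF /eqP tT sAT nA nB.
apply/exists_inP; apply: contraT => /exists_inPn H.
have : ie F T <= ie F A + ie F (T :\: A).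
  rewrite /ie; apply: leq_trans (leq_card_setU _ _).1; apply: subset_leq_card.
  apply/subsetP=> f; rewrite !inE => /andP[fF' fT]; rewrite fF' /=.
  have := H f fF'; rewrite fT /= negb_and !negbK => /orP[] /eqP f0.
    apply/orP; right; apply/subsetP=> x fx; rewrite inE (subsetP fT) // andbT.
    by apply: contraT; rewrite negbK => xA; move/setP: f0 => /(_ x); rewrite !inE fx xA.
  apply/orP; left; apply/subsetP=> x fx; apply: contraT => xA.
  by move/setP: f0 => /(_ x); rewrite !inE fx xA (subsetP fT).
have := forestP A fF; have := forestP (T :\: A) fF.
have := cardsID A T; rewrite (setIidPr sAT).
move: nA nB; rewrite -!card_gt0; lia.
Qed.


Lemma nonforest_tight F g : forest F -> ~~ forest (F :|: [set g]) ->
  exists X, tight F X && (g \subset X).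
Proof.
move=> fF /forallPn[Y]; rewrite -ltnNge => hY.
exists Y; have := ie_add F g Y; have := forestP Y fF.
case: (g \subset Y); rewrite /tight ?andbT => *; apply/eqP; lia.
Qed.

Lemma exists_mintight F g : forest F -> g != set0 -> (exists X, tight F X && (g \subset X)) ->
  exists T, [/\ tight F T, g \subset T & forall X, tight F X -> g \subset X -> T \subset X].
Proof.
move=> fF g0 [X0 PX0].
case: (@arg_minnP _ X0 (fun X => tight F X && (g \subset X)) (fun X => #|X|) PX0) => T /andP[tT gT] minT.
exists T; split=> // X tX gX.
have gXT : X :&: T != set0.
  case/set0Pn: g0 => x gx; apply/set0Pn; exists x; rewrite inE (subsetP gX) ?(subsetP gT) //.
have [_ tI] := tight_union fF tX tT gXT.
have := minT (X :&: T); rewrite tI subsetI gX gT => /(_ isT) le.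
have : X :&: T == T by rewrite eqEcard subsetIr le.
by move/eqP <-; rewrite subsetIl.
Qed.

Lemma swap_forest F g T h : forest F -> g \notin F -> tight F T -> g \subset T ->
  (forall X, tight F X -> g \subset X -> T \subset X) ->
  h \in F -> h \subset T -> forest (F :\ h :|: [set g]).
Proof.
move=> fF gF tT gT minT hF hT; apply: forestI => Y.
have a1 := ie_add (F :\ h) g Y.
have a2 : ie (F :\ h) Y <= ie F Y := ie_sub Y (subD1set F h).
have a3 := forestP Y fF.
case: (boolP (g \subset Y)) => gY; last first.
  move: a1 a2 a3; rewrite (negbTE gY) /= addn0 => x y z; exact: leq_trans x (leq_trans y z).
case: (boolP (tight F Y)) => tY.
  have hY : h \subset Y by apply: subset_trans hT (minT Y tY gY).
  have := ie_del hF hY; move: a1 a3; rewrite gY; lia.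
have := not_tight fF tY; move: a1 a2 a3; rewrite gY /=; lia.
Qed.

Lemma swap_in_tight F g T f : twos [set g] -> g \notin F -> f \in F -> tight F T -> g \subset T ->
  forest (F :\ f :|: [set g]) -> f \subset T.
Proof.
move=> tw gF fF tT gT fF'; apply: contraT => fT.
have := forestP T fF'; rewrite ie_add_eq //; last by rewrite !inE negb_and gF orbT.
rewrite ie_del_out // (eqP tT).
have : 0 < #|T|.
  by apply: leq_trans (subset_leq_card gT); rewrite (tw g) ?set11.
lia.
Qed.

Lemma max_union (P : {set V} -> bool) u (S : {set V}) :
  P [set u] -> u \in S ->
  (forall X Y, P X -> P Y -> u \in X -> u \in Y -> P (X :|: Y)) ->
  (forall y, y \in S -> exists X, [&& P X, u \in X, y \in X & X \subset S]) -> P S.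
Proof.
move=> Pu uS PU HS.
have Q0 : [&& P [set u], u \in [set u] & [set u] \subset S] by rewrite Pu set11 sub1set uS.
case: (@arg_maxnP _ [set u] (fun X => [&& P X, u \in X & X \subset S]) (fun X => #|X|) Q0).
move=> M /and3P[PM uM MS] maxM.
suff -> : S = M by [].
apply/eqP; rewrite eqEsubset MS andbT; apply/subsetP=> y yS.
case: (HS y yS) => X /and4P[PX uX yX XS].
have QXM : [&& P (X :|: M), u \in X :|: M & X :|: M \subset S].
  by rewrite PU // inE uX subUset XS MS.
have le := maxM _ QXM.
have : M == X :|: M by rewrite eqEcard subsetUr; exact: le.
by move/eqP ->; rewrite inE yX.
Qed.

End Sparse.


Lemma connect_ind (T : finType) (r : rel T) (P : T -> Prop) x :
  P x -> (forall a b, connect r x a -> P a -> r a b -> P b) ->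
  forall y, connect r x y -> P y.
Proof.
move=> Px IH y /connectP[p pth ->].
have : forall a, connect r x a -> P a -> path r a p -> P (last a p).
  elim: p {pth} => [|b p IHp] a ca Pa //= /andP[rab pth].
  apply: IHp pth; first exact: connect_trans ca (connect1 rab).
  exact: IH rab.
by apply=> //; apply: connect0.
Qed.

Lemma disjU (T : finType) (A B C : {set T}) :
  [disjoint A :|: B & C] = [disjoint A & C] && [disjoint B & C].
Proof. by rewrite -!setI_eq0 setIUl setU_eq0. Qed.

Section Pack.
Variables (V : finType) (E : {set {set V}}) (m : nat).
Hypothesis HE : is_edge_set E.
Implicit Types (X Y T C : {set V}) (e f g h : {set V}) (x y : V).

Definition tup := {ffun 'I_m -> {set {set V}}}.
Implicit Types (F : tup).
Definition used F := \bigcup_(i < m) F i.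
Definition valid F := [forall i, (F i \subset E) && forest (F i)] &&
   [forall i, forall j, (i != j) ==> [disjoint F i & F j]].
Definition ttotal F := \sum_(i < m) #|F i|.
Definition upd F (i : 'I_m) (S : {set {set V}}) : tup := [ffun j => if j == i then S else F j].
Definition repl : rel tup := fun F F' => valid F && valid F' &&
  [exists i, exists f, exists g, [&& f \in F i, g \in E, g \notin used F &
      F' == upd F i (F i :\ f :|: [set g])]].

Lemma E2 e : e \in E -> #|e| = 2.
Proof. by move=> eE; move/forall_inP: HE => /(_ e eE)/eqP. Qed.

Lemma twosE (A : {set {set V}}) : A \subset E -> twos A.
Proof. by move=> sAE e /(subsetP sAE)/E2. Qed.

Lemma e_nonempty e : e \in E -> e != set0.
Proof. by move/E2 => c; rewrite -card_gt0 c. Qed.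

Lemma validP F : valid F ->
  (forall i, F i \subset E) /\ (forall i, forest (F i)) /\
  (forall i j, i != j -> [disjoint F i & F j]).
Proof.
case/andP=> /forallP H1 /forallP H2; split; first by move=> i; case/andP: (H1 i).
split; first by move=> i; case/andP: (H1 i).
by move=> i j; move/forallP: (H2 i) => /(_ j)/implyP.
Qed.

Lemma usedP F e : reflect (exists i, e \in F i) (e \in used F).
Proof. by apply: (iffP bigcupP) => [[i _ ?]|[i ?]]; exists i. Qed.

Lemma disj_notin F i j e : valid F -> i != j -> e \in F i -> e \notin F j.
Proof.
by move=> /validP[_ [_ H]] ij ei; rewrite (disjointFr (H i j ij) ei).
Qed.

Lemma total_upd F i (S : {set {set V}}) : ttotal (upd F i S) + #|F i| = ttotal F + #|S|.
Proof.
rewrite /ttotal (bigD1 i) //= [in RHS](bigD1 i) //= ffunE eqxx.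
have -> : \sum_(j < m | j != i) #|upd F i S j| = \sum_(j < m | j != i) #|F j|.
  by apply: eq_bigr => j ji; rewrite ffunE (negbTE ji).
by rewrite [RHS]addnC (addnC #|F i|) addnA.
Qed.

Lemma valid_upd F i (S : {set {set V}}) : valid F -> S \subset E -> forest S ->
  (forall j, j != i -> [disjoint S & F j]) -> valid (upd F i S).
Proof.
move=> /validP[H1 [H2 H3]] SE fS dS; apply/andP; split; apply/forallP=> j.
  by rewrite ffunE; case: (j =P i) => _; rewrite ?SE ?fS ?H1 ?H2.
apply/forallP=> l; apply/implyP=> jl; rewrite !ffunE.
case: (j =P i) => [ji|/eqP ji]; case: (l =P i) => [li|/eqP li].
- by rewrite ji li eqxx in jl.
- by rewrite dS // -ji eq_sym.
- by rewrite disjoint_sym dS.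
- exact: H3.
Qed.

Lemma repl_sym : symmetric repl.
Proof.
suff H : forall F F', repl F F' -> repl F' F.
  by move=> F F'; apply/idP/idP; apply: H.
move=> F F' /andP[/andP[vF vF'] /existsP[i /existsP[f /existsP[g]]]].
case/and4P=> fi gE gu /eqP dF'.
have gi : g \notin F i by apply: contra gu => gi; apply/usedP; exists i.
have fE : f \in E by case/validP: vF => H _; exact: (subsetP (H i)).
apply/andP; split; first by rewrite vF vF'.
apply/existsP; exists i; apply/existsP; exists g; apply/existsP; exists f.
rewrite fE dF' ffunE eqxx !inE eqxx orbT /=; apply/andP; split.
  apply/usedP=> -[j]; rewrite ffunE; case: (j =P i) => [_|/eqP ji].
    by rewrite !inE; case: (f =P g) => [fg|_] /=; [rewrite -fg fi in gi|rewrite eqxx].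
  by apply/negP; apply: disj_notin vF _ fi; rewrite eq_sym.
apply/eqP/ffunP=> j; rewrite !ffunE; case: (j =P i) => [->|//].
apply/setP=> e; rewrite !inE.
case: (e =P g) => [->|_]; first by rewrite (negbTE gi) /=; by case: (g =P f) => // gf; move: gi; rewrite gf fi.
by case: (e =P f) => [->|] /=; rewrite ?fi ?andbT ?orbF.
Qed.

Lemma repl_total F F' : repl F F' -> ttotal F' = ttotal F.
Proof.
case/andP=> _ /existsP[i /existsP[f /existsP[g]]] /and4P[fi _ gu /eqP ->].
have gi : g \notin F i by apply: contra gu => gi; apply/usedP; exists i.
have := total_upd F i (F i :\ f :|: [set g]).
have -> : #|F i :\ f :|: [set g]| = #|F i|.
  rewrite setUC cardsU1 !inE (negbTE gi) andbF /= (cardsD1 f (F i)) fi //.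
lia.
Qed.

Variable F0 : tup.
Hypothesis vF0 : valid F0.
Hypothesis maxF0 : forall F, valid F -> ttotal F <= ttotal F0.

Definition reach F := connect repl F0 F.

Lemma reach_valid F : reach F -> valid F /\ ttotal F = ttotal F0.
Proof.
apply: (connect_ind (P := fun F => valid F /\ ttotal F = ttotal F0)) => //.
move=> a b _ [_ ta] rab; split; first by case/andP: rab => /andP[].
by rewrite (repl_total rab).
Qed.

Lemma reach_nonforest F i g : reach F -> g \in E -> g \notin used F ->
  ~~ forest (F i :|: [set g]).
Proof.
move=> /reach_valid[vF tF] gE gu; apply/negP=> fS.
have gi : forall j, g \notin F j by move=> j; apply: contra gu => gj; apply/usedP; exists j.
have vU : valid (upd F i (F i :|: [set g])).
  case/validP: (vF) => H1 [H2 H3].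
  apply: valid_upd => //; first by rewrite subUset H1 sub1set gE.
  by move=> j ji; rewrite disjU disjoints1 gi andbT; apply: H3; rewrite eq_sym.
have := maxF0 vU; have := total_upd F i (F i :|: [set g]).
rewrite setUC cardsU1 (negbTE (gi i)) /=; lia.
Qed.

Definition E0 := [set g in E | [exists F, reach F && (g \notin used F)]].
Definition r0 : rel V := fun a b => [set a; b] \in E0.
Definition comp x := [set y | connect r0 x y].

Lemma E0_pair g : g \in E0 -> exists a b, a != b /\ g = [set a; b].
Proof. by case/setIdP=> /E2/eqP/cards2P. Qed.

Lemma comp_closed u g x y : g \in E0 -> x \in g -> y \in g -> x \in comp u -> y \in comp u.
Proof.
move=> gE0 xg yg; rewrite !inE => cx.
case: (E0_pair gE0) => a [b [_ dg]]; subst g.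
move: xg yg cx; rewrite !inE => /orP[] /eqP -> /orP[] /eqP -> cx //.
  by apply: connect_trans cx (connect1 _).
by apply: connect_trans cx (connect1 _); rewrite /r0 setUC.
Qed.

Section MinT.
Variables (F : tup) (i : 'I_m) (g T : {set V}).
Hypotheses (rF : reach F) (gE : g \in E) (gu : g \notin used F) (tT : tight (F i) T)
  (gT : g \subset T) (minT : forall X, tight (F i) X -> g \subset X -> T \subset X).

Lemma gi_notin j : g \notin F j.
Proof. by apply: contra gu => gj; apply/usedP; exists j. Qed.

Lemma minT_E0 h : h \in F i -> h \subset T -> h \in E0.
Proof.
move=> hi hT.
have [vF _] := reach_valid rF.
have [H1 [H2 H3]] := validP vF.
have fS : forest (F i :\ h :|: [set g]) := swap_forest (H2 i) (gi_notin i) tT gT minT hi hT.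
have vU : valid (upd F i (F i :\ h :|: [set g])).
  apply: valid_upd => //.
    by rewrite subUset sub1set gE andbT; apply: subset_trans (subD1set _ _) (H1 i).
  move=> j ji; rewrite disjU disjoints1 gi_notin andbT.
  by apply: disjointWl (subD1set _ _) _; apply: H3; rewrite eq_sym.
have rU : repl F (upd F i (F i :\ h :|: [set g])).
  rewrite /repl vF vU /=; apply/existsP; exists i; apply/existsP; exists h.
  by apply/existsP; exists g; rewrite hi gE gu eqxx.
rewrite inE (subsetP (H1 i)) //=; apply/existsP; exists (upd F i (F i :\ h :|: [set g])).
apply/andP; split; first exact: connect_trans rF (connect1 rU).
apply/usedP=> -[j]; rewrite ffunE.
case: (j =P i) => [_|/eqP ji]; last by apply/negP; apply: disj_notin vF _ hi; rewrite eq_sym.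
rewrite !inE eqxx /= => /eqP hg.
by move: (gi_notin i); rewrite -hg hi.
Qed.

Lemma minT_comp u : T :&: comp u != set0 -> T \subset comp u.
Proof.
move=> TC; apply: contraT => nTC.
have [vF _] := reach_valid rF.
have [_ [H2 _]] := validP vF.
have sA : T :&: comp u \subset T by apply: subsetIl.
have nB : T :\: (T :&: comp u) != set0.
  case/subsetPn: nTC => y yT; rewrite inE => yC; apply/set0Pn; exists y.
  by rewrite !inE yT (negbTE yC).
case: (tight_conn (H2 i) tT sA TC nB) => h hi /and3P[hT /set0Pn[x xA] /set0Pn[y yB]].
have hE0 := minT_E0 hi hT.
move: xA yB; rewrite !in_setI in_setD in_setI => /andP[xh /andP[_ xC]] /andP[yh /andP[nyC yT]].
by move: nyC; rewrite yT (comp_closed hE0 xh yh xC).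
Qed.

End MinT.

Lemma exists_minT F i g : reach F -> g \in E -> g \notin used F ->
  exists T, [/\ tight (F i) T, g \subset T & forall X, tight (F i) X -> g \subset X -> T \subset X].
Proof.
move=> rF gE gu.
have [vF _] := reach_valid rF; have [_ [H2 _]] := validP vF.
apply: exists_mintight => //; first exact: e_nonempty.
exact: nonforest_tight (H2 i) (reach_nonforest i rF gE gu).
Qed.

Definition conn F i C x y :=
  [exists X : {set V}, [&& X \subset C, x \in X, y \in X & tight (F i) X]].

Lemma conn_trans F i C x y z : valid F -> conn F i C x y -> conn F i C y z -> conn F i C x z.
Proof.
move=> vF /existsP[X /and4P[XC xX yX tX]] /existsP[Y /and4P[YC yY zY tY]].
have [_ [H2 _]] := validP vF.
have XY : X :&: Y != set0 by apply/set0Pn; exists y; rewrite inE yX yY.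
have [tU _] := tight_union (H2 i) tX tY XY.
by apply/existsP; exists (X :|: Y); rewrite subUset XC YC !inE xX zY orbT tU.
Qed.

Lemma conn_refl F i C x : valid F -> x \in C -> conn F i C x x.
Proof.
move=> vF xC; have [H1 _] := validP vF.
apply/existsP; exists [set x]; rewrite sub1set xC set11 /=.
exact: tight1 (twosE (H1 i)).
Qed.

Lemma transport F F' i u x y : reach F -> repl F F' ->
  conn F i (comp u) x y -> conn F' i (comp u) x y.
Proof.
move=> rF rFF' /existsP[X /and4P[XC xX yX tX]].
have rF' : reach F' := connect_trans rF (connect1 rFF').
case/andP: rFF' => /andP[vF vF'] /existsP[j /existsP[f /existsP[g /and4P[fj gE gu /eqP dF']]]].
have [_ [H2' _]] := validP vF'. have [H1 [H2 H3]] := validP vF.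
case: (j =P i) => [ji|/eqP ji]; last first.
  apply/existsP; exists X; rewrite XC xX yX /= dF' ffunE eq_sym (negbTE ji); exact: tX.
subst j.
have dFi : F' i = F i :\ f :|: [set g] by rewrite dF' ffunE eqxx.
have fFi := H2' i; rewrite dFi in fFi.
have gi : g \notin F i by apply: contra gu => gi; apply/usedP; exists i.
have gi' : g \notin F i :\ f by rewrite inE negb_and gi orbT.
case: (boolP (f \subset X)) => fX; last first.
  apply/existsP; exists X; rewrite XC xX yX /= dFi /tight eqn_leq forestP //=.
  rewrite -(tight_eq tX) -(ie_del_out (F i) fX).
  exact: ie_sub (subsetUl _ _).
have [T [tT gT minT]] := exists_minT i rF gE gu.
have tw : twos [set g] by move=> e; rewrite inE => /eqP ->; exact: E2.
have fT : f \subset T := swap_in_tight tw gi fj tT gT fFi.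
have fne : f != set0 by apply: e_nonempty; exact: (subsetP (H1 i)).
case/set0Pn: fne => z zf.
have TC : T \subset comp u.
  apply: (minT_comp rF gE gu tT gT minT).
  by apply/set0Pn; exists z; rewrite inE (subsetP fT) // (subsetP XC) // (subsetP fX).
have XT : X :&: T != set0 by apply/set0Pn; exists z; rewrite inE (subsetP fT) // (subsetP fX).
have [tU _] := tight_union (H2 i) tX tT XT.
apply/existsP; exists (X :|: T); rewrite subUset XC TC !inE xX yX /= dFi.
have fU : f \subset X :|: T by apply: subset_trans fX (subsetUl _ _).
have gU : g \subset X :|: T by apply: subset_trans gT (subsetUr _ _).
rewrite /tight ie_add_eq // ie_del //; exact: tU.
Qed.

Lemma edge_conn u i a b : a \in comp u -> r0 a b -> conn F0 i (comp u) a b.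
Proof.
move=> au rab; have := rab; rewrite /r0 inE => /andP[gE /existsP[F /andP[rF gu]]].
have [T [tT gT minT]] := exists_minT i rF gE gu.
have TC : T \subset comp u.
  apply: (minT_comp rF gE gu tT gT minT).
  by apply/set0Pn; exists a; rewrite inE au (subsetP gT) // !inE eqxx.
have c0 : conn F i (comp u) a b.
  apply/existsP; exists T; rewrite TC tT !(subsetP gT) // !inE eqxx ?orbT //.
have cF : connect repl F F0 by rewrite (sym_connect_sym repl_sym).
have key : forall G, connect repl F G -> reach G /\ conn G i (comp u) a b.
  apply: (@connect_ind _ repl (fun G => reach G /\ conn G i (comp u) a b)); first by split.
  move=> a0 b0 _ [ra0 ca0] rab0; split; first exact: connect_trans ra0 (connect1 rab0).
  exact: transport ra0 rab0 ca0.
by case: (key F0 cF).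
Qed.

Lemma comp_conn u i y : y \in comp u -> conn F0 i (comp u) u y.
Proof.
rewrite inE; apply: (@connect_ind _ r0 (fun y => conn F0 i (comp u) u y)).
  by apply: conn_refl => //; rewrite inE connect0.
move=> a b cua Pa rab; apply: conn_trans vF0 Pa _.
by apply: edge_conn rab; rewrite inE.
Qed.

Lemma comp_tight u i : tight (F0 i) (comp u).
Proof.
have [H1 [H2 _]] := validP vF0.
apply: (max_union (u := u)).
- exact: tight1 (twosE (H1 i)).
- by rewrite inE connect0.
- move=> X Y tX tY uX uY.
  have XY : X :&: Y != set0 by apply/set0Pn; exists u; rewrite inE uX uY.
  by case: (tight_union (H2 i) tX tY XY).
- move=> y /(comp_conn i) /existsP[X /and4P[XC uX yX tX]].
  by exists X; rewrite tX uX yX XC.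
Qed.

Definition alltight X := [forall i, tight (F0 i) X].
Definition eqv : rel V := fun x y => [exists X : {set V}, [&& x \in X, y \in X & alltight X]].

Lemma alltight_union X Y : alltight X -> alltight Y -> X :&: Y != set0 -> alltight (X :|: Y).
Proof.
have [_ [H2 _]] := validP vF0.
move=> /forallP tX /forallP tY XY; apply/forallP=> i.
by case: (tight_union (H2 i) (tX i) (tY i) XY).
Qed.

Lemma alltight1 x : alltight [set x].
Proof. have [H1 _] := validP vF0; apply/forallP=> i; exact: tight1 (twosE (H1 i)). Qed.

Lemma eqv_equiv : equivalence_rel eqv.
Proof.
move=> x y z; split.
  by apply/existsP; exists [set z]; rewrite set11 alltight1.
move=> /existsP[X /and3P[xX yX tX]].
have H : forall a b c, eqv a b -> eqv a c -> eqv b c.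
  move=> a b c /existsP[A /and3P[aA bA tA]] /existsP[B /and3P[aB cB tB]].
  apply/existsP; exists (A :|: B); rewrite !inE bA cB orbT /=.
  by apply: alltight_union => //; apply/set0Pn; exists a; rewrite inE aA aB.
have exy : eqv x y by apply/existsP; exists X; rewrite xX yX.
apply/idP/idP => [exz|eyz]; first exact: H exy exz.
have exx : eqv x x by apply/existsP; exists [set x]; rewrite set11 alltight1.
exact: (H y x z (H x y x exy exx) eyz).
Qed.

Lemma unused_eqv g : g \in E -> g \notin used F0 -> exists a b, g = [set a; b] /\ eqv a b.
Proof.
move=> gE gu.
have gE0 : g \in E0 by rewrite inE gE; apply/existsP; exists F0; rewrite gu andbT /reach connect0.
case: (E0_pair gE0) => a [b [_ dg]]; exists a, b; split=> //.
apply/existsP; exists (comp a); rewrite !inE connect0 /=.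
apply/andP; split; first by apply: connect1; rewrite /r0 -dg.
by apply/forallP=> i; apply: comp_tight.
Qed.

Lemma class_tight x : alltight [set y | eqv x y].
Proof.
apply: (max_union (u := x)).
- exact: alltight1.
- by rewrite inE (eqv_equiv x x x).1.
- move=> X Y tX tY uX uY; apply: alltight_union => //.
  by apply/set0Pn; exists x; rewrite inE uX uY.
- move=> y; rewrite inE => /existsP[X /and3P[xX yX tX]].
  exists X; rewrite tX xX yX /=; apply/subsetP=> z zX; rewrite inE.
  by apply/existsP; exists X; rewrite xX zX.
Qed.

End Pack.


Lemma sum_ind (T : finType) (A : {set T}) (b : pred T) :
  \sum_(e in A) (b e : nat) = #|[set e in A | b e]|.
Proof.
rewrite -sum1_card [RHS]big_mkcond [LHS]big_mkcond /=.
by apply: eq_bigr => e _; rewrite inE; case: (e \in A); case: (b e).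
Qed.

Lemma stay_in (T : finType) (r : rel T) (C : {set T}) x y :
  (forall a b, r a b -> a \in C -> b \in C) -> x \in C -> connect r x y -> y \in C.
Proof.
move=> H xC; apply: (@connect_ind _ r (fun z => z \in C)) => // a b _ aC rab.
exact: H rab aC.
Qed.

Section Count.
Variables (V : finType) (E : {set {set V}}) (m : nat).
Hypothesis HE : is_edge_set E.
Hypothesis HC : edge_connected (2 * m) E.

Definition crossb (e C : {set V}) := (e :&: C != set0) && ~~ (e \subset C).
Definition delta (C : {set V}) := [set e in E | crossb e C].

Lemma cut_bound (C : {set V}) x y : x \in C -> y \notin C -> 2 * m <= #|delta C|.
Proof.
move=> xC yC; rewrite leqNgt; apply/negP => lt.
have sE : delta C \subset E by apply/subsetP=> e; rewrite inE => /andP[].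
have cxy := HC sE lt x y.
move/negP: yC; apply; apply: stay_in xC cxy => a b.
rewrite /adj => /andP[ab]; rewrite !inE => /andP[nd eE] aC.
apply: contraT => bC; move: nd; rewrite eE /crossb /=.
have -> : [set a; b] :&: C != set0 by apply/set0Pn; exists a; rewrite !inE eqxx aC.
by rewrite subUset !sub1set (negbTE bC) andbF.
Qed.

Variable P : {set {set V}}.
Hypothesis partP : partition P [set: V].

Lemma sum_mem x : \sum_(C in P) (x \in C : nat) = 1.
Proof.
have [/eqP cov tri _] := and3P partP.
have xc : x \in cover P by rewrite cov inE.
rewrite (sum_ind P (fun C => x \in C)).
have -> : [set C in P | x \in C] = [set pblock P x].
  apply/setP=> C; rewrite !inE; apply/andP/eqP => [[CP xC]|->].
    by rewrite (def_pblock tri CP xC).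
  by rewrite pblock_mem // mem_pblock.
by rewrite cards1.
Qed.

Definition ins (e : {set V}) := \sum_(C in P) (e \subset C : nat).
Definition crs (e : {set V}) := \sum_(C in P) (crossb e C : nat).

Lemma pair_identity a b (C : {set V}) : a != b ->
  (a \in C : nat) + (b \in C : nat) = 2 * (([set a; b] \subset C) : nat) + (crossb [set a; b] C : nat).
Proof.
move=> ab; rewrite /crossb subUset !sub1set.
have -> : ([set a; b] :&: C != set0) = (a \in C) || (b \in C).
  apply/set0Pn/orP => [[z]|[aC|bC]].
    by rewrite !inE => /andP[/orP[]/eqP-> ->]; [left|right].
  by exists a; rewrite !inE eqxx aC.
  by exists b; rewrite !inE eqxx bC orbT.
by case: (a \in C); case: (b \in C).
Qed.

Lemma crs_ins e : e \in E -> crs e + 2 * ins e = 2.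
Proof.
move=> eE; have /cards2P[a [b [ab ->]]] := forall_inP HE e eE.
have h : \sum_(C in P) ((a \in C : nat) + (b \in C : nat)) = 2.
  by rewrite big_split /= !sum_mem.
rewrite (eq_bigr _ (fun C _ => pair_identity C ab)) big_split /= -big_distrr /= in h.
by rewrite /crs /ins addnC.
Qed.

Lemma sum_delta : \sum_(C in P) #|delta C| = \sum_(e in E) crs e.
Proof.
under eq_bigr => C _ do rewrite /delta -sum_ind.
by rewrite exchange_big.
Qed.

Lemma delta_lower : 2 * m * (#|P|.-1) <= \sum_(C in P) #|delta C|.
Proof.
have [/eqP cov tri n0] := and3P partP.
case: (leqP #|P| 1) => [p1|p2].
  have -> : #|P|.-1 = 0 by lia.
  by rewrite muln0.
apply: leq_trans (_ : \sum_(C in P) (2 * m) <= _).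
  by rewrite sum_nat_const; nia.
apply: leq_sum => C CP.
have [D [DP DC]] : exists D, D \in P /\ D != C.
  case/card_gt1P: p2 => A [B [AP BP AB]].
  case: (A =P C) => [AC|/eqP AC]; last by exists A.
  by exists B; split=> //; rewrite -AC eq_sym.
have : C != set0 by apply: contraNneq n0 => <-.
case/set0Pn => x xC.
have : D != set0 by apply: contraNneq n0 => <-.
case/set0Pn => y yD.
apply: (cut_bound xC).
exact: negbT (disjointFr ((trivIsetP tri) D C DP CP DC) yD).
Qed.

End Count.


Lemma all_eq_max m (a : 'I_m -> nat) c :
  (forall i, a i <= c) -> m * c <= \sum_(i < m) a i -> forall j, a j = c.
Proof.
move=> le ge j; apply/eqP; rewrite eqn_leq le /=; apply: contraLR ge; rewrite -!ltnNge => lt.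
have e1 : \sum_(i < m) a i = a j + \sum_(i < m | i != j) a i by rewrite (bigD1 j).
have e2 : \sum_(i < m) c = c + \sum_(i < m | i != j) c by rewrite (bigD1 j).
have l3 : \sum_(i < m | i != j) a i <= \sum_(i < m | i != j) c by apply: leq_sum.
have e4 : \sum_(i < m) c = m * c by rewrite sum_nat_const card_ord mulnC.
lia.
Qed.

Section Main.
Variables (V : finType) (E : {set {set V}}) (m : nat).
Hypothesis HE : is_edge_set E.
Hypothesis HC : edge_connected (2 * m) E.
Hypothesis Vn : 0 < #|V|.

Definition F00 : tup V m := [ffun _ => set0].

Lemma valid00 : valid E F00.
Proof.
apply/andP; split; apply/forallP=> i; rewrite ?ffunE ?sub0set /=.
  by apply/forallP=> X; rewrite /ie (_ : [set f in set0 | _] = set0) ?cards0 //; apply/setP=> f; rewrite !inE.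
by apply/forallP=> j; rewrite ffunE; apply/implyP=> _; rewrite -setI_eq0 set0I.
Qed.

Variable F0 : tup V m.
Hypothesis vF0 : valid E F0.
Hypothesis maxF0 : forall F : tup V m, valid E F -> ttotal F <= ttotal F0.

Let P := equivalence_partition (eqv F0) [set: V].
Let eqvD : {in [set: V] & &, equivalence_rel (eqv F0)}.
Proof. by move=> x y z _ _ _; apply: (eqv_equiv HE vF0). Qed.
Let partP : partition P [set: V] := equivalence_partitionP eqvD.

Lemma parts_tight C i : C \in P -> tight (F0 i) C.
Proof.
case/imsetP=> x _ ->.
have -> : [set y in [set: V] | eqv F0 x y] = [set y | eqv F0 x y] by apply/setP=> y; rewrite !inE.
by move/forallP: (class_tight HE vF0 x).
Qed.

Lemma unused_crs e : e \in E -> e \notin used F0 -> crs P e = 0.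
Proof.
move=> eE eu.
have [a [b [de ab]]] := unused_eqv HE vF0 maxF0 eE eu.
have [/eqP cov tri _] := and3P partP.
have ac : a \in cover P by rewrite cov inE.
have pb : pblock P a \in P := pblock_mem ac.
have sub : e \subset pblock P a.
  rewrite de subUset !sub1set mem_pblock ac /=.
  by rewrite (pblock_equivalence_partition eqvD) ?inE.
have i1 : 1 <= ins P e by rewrite /ins (bigD1 (pblock P a)) //= sub.
have := crs_ins HE partP eE; lia.
Qed.

Lemma crs_sum : \sum_(e in E) crs P e <= \sum_(i < m) \sum_(e in F0 i) crs P e.
Proof.
have [H1 _] := validP vF0.
have -> : \sum_(i < m) \sum_(e in F0 i) crs P e =
          \sum_(i < m) \sum_(e in E) (if e \in F0 i then crs P e else 0).
  apply: eq_bigr => i _; rewrite big_mkcond [RHS]big_mkcond; apply: eq_bigr => e _.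
  case: (boolP (e \in F0 i)) => h; last by case: (e \in E).
  by rewrite (subsetP (H1 i) e h).
apply: leq_trans (_ : _ <= \sum_(e in E) \sum_(i < m) (if e \in F0 i then crs P e else 0)) _; last by rewrite exchange_big.
apply: leq_sum => e eE.
case: (boolP (e \in used F0)) => [/usedP[i ei]|eu]; last by rewrite unused_crs.
by rewrite (bigD1 i) //= ei leq_addr.
Qed.

Lemma ins_sum i : \sum_(e in F0 i) ins P e = \sum_(C in P) #|C|.-1.
Proof.
rewrite /ins exchange_big /=; apply: eq_bigr => C CP.
by rewrite sum_ind; apply/eqP; exact: (parts_tight i CP).
Qed.

Lemma parts_count : \sum_(C in P) #|C|.-1 + #|P| = #|V|.
Proof.
have [_ _ n0] := and3P partP.
rewrite -sum1_card -big_split /= -cardsT (card_partition partP).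
apply: eq_bigr => C CP; rewrite addn1 prednK // card_gt0.
by apply: contraNneq n0 => <-.
Qed.

Lemma per_forest i : \sum_(e in F0 i) crs P e + 2 * (\sum_(C in P) #|C|.-1) = 2 * #|F0 i|.
Proof.
have [H1 _] := validP vF0.
rewrite -(ins_sum i) big_distrr -big_split /=.
rewrite (eq_bigr (fun _ => 2)); first by rewrite sum_nat_const mulnC.
move=> e ei; exact: (crs_ins HE partP (subsetP (H1 i) e ei)).
Qed.

Lemma total_lower : m * #|V|.-1 <= ttotal F0.
Proof.
set s := \sum_(C in P) #|C|.-1.
have hp := parts_count.
have hd := delta_lower HE HC partP.
have he := sum_delta E P.
have hc := crs_sum.
have hf : \sum_(i < m) \sum_(e in F0 i) crs P e + m * (2 * s) = 2 * ttotal F0.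
  have e1 : \sum_(i < m) (\sum_(e in F0 i) crs P e + 2 * s) = 2 * ttotal F0.
    by rewrite /ttotal [RHS]big_distrr; apply: eq_bigr => i _; exact: per_forest i.
  by rewrite big_split /= sum_nat_const card_ord in e1.
move: hp hd he hc hf; rewrite -/s.
set p := #|P|; set X := \sum_(C in P) #|delta E C|; set Y := \sum_(e in E) crs P e.
set Z := \sum_(i < m) \sum_(e in F0 i) crs P e; set t := ttotal F0.
move=> hp hd he hc hf.
clearbody s p X Y Z t.
nia.
Qed.

Lemma forests_spanning : forall i, #|F0 i| = #|V|.-1.
Proof.
have [_ [H2 _]] := validP vF0.
apply: all_eq_max; last exact: total_lower.
by move=> i; rewrite -ie_setT -cardsT; apply: forestP.
Qed.

End Main.

Theorem packing (V : finType) (E : {set {set V}}) (m : nat) :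
  is_edge_set E -> edge_connected (2 * m) E -> 0 < #|V| ->
  exists F : tup V m, valid E F /\ forall i, #|F i| = #|V|.-1.
Proof.
move=> HE HC Vn.
have v0 := valid00 E m.
case: (@arg_maxnP _ (F00 V m) (fun F : tup V m => valid E F) (fun F : tup V m => ttotal F) v0) => F0 vF0 maxF0.
exists F0; split=> // i; apply: (forests_spanning HE HC Vn vF0) => F vF; exact: maxF0 F vF.
Qed.


Lemma ie_U (V : finType) (A B : {set {set V}}) (X : {set V}) :
  ie (A :|: B) X <= ie A X + ie B X.
Proof.
rewrite /ie; apply: leq_trans (leq_card_setU _ _).1; apply: subset_leq_card.
by apply/subsetP=> f; rewrite !inE => /andP[/orP[]-> ->]; rewrite ?orbT.
Qed.

Theorem mainTheorem9 (k : nat) (V : finType) (E : {set {set V}}) :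
  1 <= k -> 0 < #|V| -> is_edge_set E -> edge_connected (4 * k) E ->
  exists F : 'I_k -> {set {set V}},
    (forall i, F i \subset E) /\
    (forall i, tight22 (F i)) /\
    (forall i j, i != j -> [disjoint F i & F j]).
Proof.
move=> k1 Vn HE HC4.
have HC : edge_connected (2 * (2 * k)) E by rewrite mulnA.
case: (packing HE HC Vn) => T [vT cT].
have [H1 [H2 H3]] := validP vT.
have lo_lt : forall i : 'I_k, i.*2 < 2 * k by move=> i; have := ltn_ord i; lia.
have hi_lt : forall i : 'I_k, i.*2.+1 < 2 * k by move=> i; have := ltn_ord i; lia.
pose lo (i : 'I_k) : 'I_(2 * k) := Ordinal (lo_lt i).
pose hi (i : 'I_k) : 'I_(2 * k) := Ordinal (hi_lt i).
have ne : forall (a b : 'I_(2 * k)), val a != val b -> a != b.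
  by move=> a b; apply: contra => /eqP ->.
exists (fun i => T (lo i) :|: T (hi i)); split; last split.
- by move=> i; rewrite subUset !H1.
- move=> i; split.
    move=> X F' /andP[sF /forall_inP sX].
    apply: leq_trans (_ : ie (T (lo i) :|: T (hi i)) X <= _).
      apply: subset_leq_card; apply/subsetP=> f fF; rewrite inE (subsetP sF) //=.
      exact: sX.
    apply: leq_trans (ie_U _ _ _) _.
    have := forestP X (H2 (lo i)); have := forestP X (H2 (hi i)).
    rewrite maxn0; lia.
  have dj : [disjoint T (lo i) & T (hi i)] by apply: H3; apply: ne => /=; lia.
  rewrite cardsU (disjoint_setI0 dj) cards0 !cT; lia.
- move=> i j ij.
  have ij2 : (i : nat) <> j by move=> h; move: ij; rewrite (val_inj h) eqxx.
  rewrite disjU !(disjoint_sym _ (T _ :|: T _)) !disjU.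
  by rewrite !H3 //; apply: ne => /=; apply/eqP; rewrite -!muln2; lia.
Qed.
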